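(* Let $G$ be the undirected graph with vertex set $\{v_1,\dots,v_8\}$ and edge set $\{v_1v_5,\ v_1v_6,\ v_2v_5,\ v_2v_6,\ v_2v_7,\ v_2v_8,\ v_4v_7,\ v_4v_8\}$. Consider the problem of finding a population of size two of $4$-vertex covers of $G$ maximizing the Hamming distance between its two members. The sets $V_1=\{v_1,v_2,v_7,v_8\}$, $V_2=\{v_2,v_4,v_5,v_6\}$, $V_3=\{v_1,v_2,v_3,v_4\}$, $V_4=\{v_5,v_6,v_7,v_8\}$ are $4$-vertex covers of $G$, and $V_1$, $V_2$, $V_4$ are non-excessive. Moreover, the unique population of size two with the maximum Hamming distance, which equals $8$, is $(V_3,V_4)$. The population $(V_1,V_2)$ has Hamming distance $6$, and replacing either of its individuals with a different vertex cover of size $3$ or $4$ strictly reduces the Hamming distance between the two individuals; that is, this population is a local optimum.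
   Context: A vertex cover of $G=(V,E)$ is a set $C\subseteq V$ such that every edge has at least one endpoint in $C$; a $4$-vertex cover is a vertex cover of size at most $4$. A vertex cover $C$ is non-excessive if for every $v\in C$, $C\setminus\{v\}$ is not a vertex cover. Subsets of $V$ are identified with bit strings of length $|V|$ (the $i$-th bit indicates whether $v_i$ is included), and the Hamming distance between two sets is the Hamming distance between the corresponding bit strings, i.e. the size of their symmetric difference. A population of size two is a pair (multiset) of two covers. *)

(* Defs.v *)
From mathcomp Require Import all_boot.
Set Implicit Arguments. Unset Strict Implicit. Unset Printing Implicit Defensive.

(* Vertex v_i (1 <= i <= 8) is represented by the ordinal i-1 : 'I_8. *)
Definition V := 'I_8.
Definition v (i : nat) : V := inord i.-1.

Definition G_edges : seq (nat * nat) :=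
  [:: (1,5); (1,6); (2,5); (2,6); (2,7); (2,8); (4,7); (4,8)].

Definition adj (x y : V) : bool :=
  has (fun e => ((v e.1 == x) && (v e.2 == y)) || ((v e.1 == y) && (v e.2 == x)))
      G_edges.

Definition vertex_cover (C : {set V}) : Prop :=
  forall x y : V, adj x y -> (x \in C) || (y \in C).

Definition k_vertex_cover (k : nat) (C : {set V}) : Prop :=
  vertex_cover C /\ #|C| <= k.

Definition non_excessive (C : {set V}) : Prop :=
  vertex_cover C /\ forall x, x \in C -> ~ vertex_cover (C :\ x).

Definition hamming (A B : {set V}) : nat := #|(A :\: B) :|: (B :\: A)|.

Definition V1 : {set V} := [set v 1; v 2; v 7; v 8].
Definition V2 : {set V} := [set v 2; v 4; v 5; v 6].
Definition V3 : {set V} := [set v 1; v 2; v 3; v 4].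
Definition V4 : {set V} := [set v 5; v 6; v 7; v 8].

(* Main.v *)
Require Import Defs.
From mathcomp Require Import all_boot.

Definition bitsOf (A : {set V}) : seq bool := [seq (v i \in A) | i <- iota 1 8].
Definition g (s : seq bool) (i : nat) : bool := nth false s i.-1.
Definition F (A : {set V}) := g (bitsOf A).

Definition vcb (f : nat -> bool) := all (fun e => f e.1 || f e.2) G_edges.
Definition cnt (f : nat -> bool) := count f (iota 1 8).
Definition hm (f h : nat -> bool) := count (fun i => f i != h i) (iota 1 8).
Definition eqb' (f h : nat -> bool) := all (fun i => f i == h i) (iota 1 8).

Lemma size_bits (A : {set V}) : size (bitsOf A) = 8.
Proof. by rewrite size_map size_iota. Qed.

Lemma Fv (A : {set V}) i : i \in iota 1 8 -> F A i = (v i \in A).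
Proof.
rewrite mem_iota => /andP[i1 i8].
rewrite /F /g /bitsOf (nth_map 0); last by rewrite size_iota; case: i i1 i8.
rewrite nth_iota; last by case: i i1 i8.
by case: i i1 i8.
Qed.

Lemma memF (A : {set V}) (x : V) : (x \in A) = F A x.+1.
Proof.
rewrite Fv; last by rewrite mem_iota /= ltnS ltn_ord.
by rewrite /v /= inord_val.
Qed.

Lemma enumV : enum V = map v (iota 1 8).
Proof.
apply: (inj_map val_inj); rewrite (val_enum_ord 8) -map_comp.
rewrite (iffLR (@eq_in_map _ _ _ predn _)); first by [].
move=> i; rewrite mem_iota => /andP[i1 i8] /=.
by rewrite /v inordK //; case: i i1 i8.
Qed.

Lemma veq i j : 0 < i <= 8 -> 0 < j <= 8 -> (v i == v j) = (i == j).
Proof.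
case: i => // i; case: j => // j; rewrite !ltnS /= => hi hj.
apply/eqP/eqP => [h|->] //.
by move/(congr1 (@nat_of_ord 8)): h; rewrite /v /= !inordK // => ->.
Qed.

Lemma cntV (p : pred V) : count p (enum V) = count (fun i => p (v i)) (iota 1 8).
Proof. by rewrite enumV count_map. Qed.

Lemma cardV (A : {set V}) : #|A| = count (fun i => v i \in A) (iota 1 8).
Proof. by rewrite cardE /enum_mem size_filter -enumT cntV. Qed.

Lemma T2 (A : {set V}) : #|A| = cnt (F A).
Proof. rewrite cardV /cnt; apply: eq_in_count => i Hi; by rewrite Fv. Qed.

Lemma T3 (A B : {set V}) : hamming A B = hm (F A) (F B).
Proof.
rewrite /hamming cardV /hm; apply: eq_in_count => i Hi /=.
rewrite !Fv // !inE. by case: (v i \in A); case: (v i \in B).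
Qed.

Lemma T4 (A B : {set V}) : A = B <-> eqb' (F A) (F B).
Proof.
split; first by move=> ->; apply/allP => i _.
move/allP=> H; apply/setP => x; rewrite !memF; apply/eqP/H.
by rewrite mem_iota /= ltnS ltn_ord.
Qed.

Lemma edges_in : all (fun e => (e.1 \in iota 1 8) && (e.2 \in iota 1 8)) G_edges.
Proof. by []. Qed.

Lemma T1 (A : {set V}) : vertex_cover A <-> vcb (F A).
Proof.
split.
- move=> H; apply/allP => e He.
  have /andP[h1 h2] := elimT allP edges_in e He.
  rewrite !Fv //; apply: H; apply/hasP; exists e => //; by rewrite !eqxx.
- move/allP=> H x y; rewrite /adj; case/hasP=> e He Hxy.
  have /andP[h1 h2] := elimT allP edges_in e He.
  move: (H e He); rewrite !Fv // => Hc; move: Hxy Hc.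
  case/orP=> [/andP[/eqP<- /eqP<-]|/andP[/eqP<- /eqP<-]] //; by rewrite orbC.
Qed.

Fixpoint allL n : seq (seq bool) :=
  if n is n'.+1 then [seq b :: s | b <- [:: true; false], s <- allL n'] else [:: [::]].

Lemma mem_allL s : s \in allL (size s).
Proof.
elim: s => [|b s IH] //=.
by case: b; rewrite /= !mem_cat (map_f _ IH) ?orbT.
Qed.

Definition l1 := [:: true; true; false; false; false; false; true; true].
Definition l2 := [:: false; true; false; true; true; true; false; false].
Definition l3 := [:: true; true; true; true; false; false; false; false].
Definition l4 := [:: false; false; false; false; true; true; true; true].

Definition Q3 (f h : nat -> bool) :=
  vcb f ==> (cnt f <= 4) ==> vcb h ==> (cnt h <= 4) ==>
  (hm f h <= 8) && ((hm f h == 8) ==>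
     (eqb' f (g l3) && eqb' h (g l4)) || (eqb' f (g l4) && eqb' h (g l3))).

Definition Q4 (f : nat -> bool) :=
  vcb f ==> ((cnt f == 3) || (cnt f == 4)) ==>
  ((~~ eqb' f (g l1)) ==> (hm f (g l2) < 6)) &&
  ((~~ eqb' f (g l2)) ==> (hm (g l1) f < 6)).

Lemma brute3c : all (fun s => all (fun t => Q3 (g s) (g t)) (allL 8)) (allL 8).
Proof. by vm_compute. Qed.

Lemma brute4c : all (fun s => Q4 (g s)) (allL 8).
Proof. by vm_compute. Qed.

Lemma brute3 (A B : {set V}) : Q3 (F A) (F B).
Proof.
have HA := mem_allL (bitsOf A); have HB := mem_allL (bitsOf B).
rewrite size_bits in HA HB.
exact: (allP (allP brute3c _ HA) _ HB).
Qed.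

Lemma brute4 (A : {set V}) : Q4 (F A).
Proof.
have HA := mem_allL (bitsOf A); rewrite size_bits in HA.
exact: (allP brute4c _ HA).
Qed.

Lemma FV1 : F V1 = g l1.
Proof. by rewrite /F /bitsOf /V1 /= !inE !veq. Qed.
Lemma FV2 : F V2 = g l2.
Proof. by rewrite /F /bitsOf /V2 /= !inE !veq. Qed.
Lemma FV3 : F V3 = g l3.
Proof. by rewrite /F /bitsOf /V3 /= !inE !veq. Qed.
Lemma FV4 : F V4 = g l4.
Proof. by rewrite /F /bitsOf /V4 /= !inE !veq. Qed.

Lemma kvc (A : {set V}) : k_vertex_cover 4 A <-> vcb (F A) && (cnt (F A) <= 4).
Proof.
split; first by case=> /T1 -> /=; rewrite -T2.
by case/andP=> /T1 h; rewrite -T2.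
Qed.


Theorem lemma3 :
  [/\ k_vertex_cover 4 V1, k_vertex_cover 4 V2, k_vertex_cover 4 V3
    & k_vertex_cover 4 V4] /\
  [/\ non_excessive V1, non_excessive V2 & non_excessive V4] /\
  (hamming V3 V4 = 8 /\
   forall A B : {set V}, k_vertex_cover 4 A -> k_vertex_cover 4 B ->
     hamming A B <= 8 /\
     (hamming A B = 8 -> (A = V3 /\ B = V4) \/ (A = V4 /\ B = V3))) /\
  (hamming V1 V2 = 6 /\
   forall C : {set V}, vertex_cover C -> (#|C| = 3 \/ #|C| = 4) ->
     (C != V1 -> hamming C V2 < 6) /\ (C != V2 -> hamming V1 C < 6)).
Proof.
split.
  by split; apply/kvc; rewrite ?FV1 ?FV2 ?FV3 ?FV4; vm_compute.
split.
  split.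
  - split; first by apply/T1; rewrite FV1; vm_compute.
    move=> x; rewrite /V1 !inE => /orP[/orP[/orP[/eqP->|/eqP->]|/eqP->]|/eqP->];
    move/T1; rewrite /F /bitsOf /= !inE !veq //; by vm_compute.
  - split; first by apply/T1; rewrite FV2; vm_compute.
    move=> x; rewrite /V2 !inE => /orP[/orP[/orP[/eqP->|/eqP->]|/eqP->]|/eqP->];
    move/T1; rewrite /F /bitsOf /= !inE !veq //; by vm_compute.
  - split; first by apply/T1; rewrite FV4; vm_compute.
    move=> x; rewrite /V4 !inE => /orP[/orP[/orP[/eqP->|/eqP->]|/eqP->]|/eqP->];
    move/T1; rewrite /F /bitsOf /= !inE !veq //; by vm_compute.
split.
  split; first by rewrite T3 FV3 FV4; vm_compute.
  move=> A B /kvc /andP[vA cA] /kvc /andP[vB cB].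
  have := brute3 A B; rewrite /Q3 vA cA vB cB /= -T3 -FV3 -FV4.
  case/andP=> -> H; split=> // /eqP /(implyP H).
  by case/orP=> /andP[/T4 -> /T4 ->]; [left|right].
split; first by rewrite T3 FV1 FV2; vm_compute.
move=> C /T1 vC hC.
have := brute4 C; rewrite /Q4 vC -T2 /=.
have -> : (#|C| == 3) || (#|C| == 4) by case: hC => ->.
rewrite -FV1 -FV2 -!T3 /= => /andP[H1 H2]; split.
- move=> h; apply: (implyP H1); apply: contra h => /T4 ->; done.
- move=> h; apply: (implyP H2); apply: contra h => /T4 ->; done.
Qed.
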